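(* Fix an execution path of naive-fvs$(G,k,\emptyset)$ that leads to a solution, with $V_-=\{x_1,\dots,x_s\}$, $F'$, $d^*$ and $\delta$ as defined in the context. For every $i\in\{1,\dots,s\}$, $\sum_{u\in F'}\delta(u,x_i)\le d^*(x_i)$.
   Context: All graphs are finite, simple and undirected; $d_G(v)$ denotes the degree of $v$ in $G$ (taken to be $0$ if $v\notin V(G)$), $G-S$ denotes deletion of a vertex set $S$, and $G[S]$ the induced subgraph. A feedback vertex set of $G$ is a set $V_-\subseteq V(G)$ such that $G-V_-$ is a forest. Algorithm naive-fvs$(G,k,F)$ (with $k$ an integer and $F\subseteq V(G)$ inducing a forest) returns a set of vertices or ``NO'' as follows (all choices among several candidates are arbitrary; degrees are in the current graph $G$): (0) If $k<0$ return NO; if $V(G)=\emptyset$ return $\emptyset$. (1) If some vertex $v$ has degree less than $2$, return naive-fvs$(G-\{v\},k,F\setminus\{v\})$. (2) If some $v\in V(G)\setminus F$ has two neighbors in the same connected component of $G[F]$, let $X=$ naive-fvs$(G-\{v\},k-1,F)$ and return $X\cup\{v\}$ (NO if $X$ is NO). (3) Pick $v\in V(G)\setminus F$ of maximum degree. (4) If $d(v)=2$: set $X=\emptyset$; while $G$ contains a cycle $C$, take any vertex $x$ of $C$ not in $F$, add $x$ to $X$ and delete $x$ from $G$; then return $X$ if $|X|\le k$, else NO. (5) Let $X=$ naive-fvs$(G-\{v\},k-1,F)$; if $X$ is not NO, return $X\cup\{v\}$. (6) Return naive-fvs$(G,k,F\cup\{v\})$. An execution path is a sequence of calls $c_0,c_1,\dots,c_t$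 where $c_0=$ naive-fvs$(G,k,\emptyset)$; for each $j<t$, $c_{j+1}$ is the recursive call made by $c_j$ in step 1 or step 2, or, if $c_j$ reaches step 5, either the call of step 5 or the call of step 6 (the latter considered even if the algorithm would not actually make it); and $c_t$ terminates in step 0 or step 4 without recursion. It leads to a solution if $c_t$ returns a set (not NO). Along the path, vertices are deleted from the current graph one at a time (in steps 1, 2, 5 and in the loop of step 4 of $c_t$). $V_-$ denotes the set of vertices deleted in step 2, in step 5 (when the path follows the step-5 call), and in the loop of step 4 of $c_t$; $F'$ denotes the set of vertices added to $F$ by step 6 (when the path follows the step-6 call). Let $x_1,\dots,x_s$ be the vertices of $V_-$ in the order they are deleted. For $v\in V_-\cup F'$, $d^*(v)$ is the degree of $v$ in the current graph at the moment $v$ is deleted (for $v\in V_-$) or moved into $F$ (for $v\in F'$). Let $G_i$ and $F_i$ be the current graph and current set $F$ immediately before $x_i$ is deleted, and let $G_{s+1}$ be the current graph at the end of the path. For $u\in F'$ and $1\le i\le s$, the number of effective decrements of $u$ incurred by $x_i$ is $\delta(u,x_i)=\max\{d_{G_i}(u),2\}-\max\{d_{G_{i+1}}(u),2\}$ if $u\in F_i$, and $\delta(u,x_i)=0$ otherwise. *)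

(* Defs.v *)
From HB Require Import structures.
From mathcomp Require Import all_boot all_order all_algebra.
Set Implicit Arguments. Unset Strict Implicit. Unset Printing Implicit Defensive.
Import Order.TTheory GRing.Theory Num.Theory.

(* A finite simple graph is given by a vertex set V : {set T} (T a finType)
   and a symmetric irreflexive edge relation e : rel T; the graph is the
   subgraph induced by e on V. *)

(* Ev1 v : step 1 deletes v;  Ev2 v : step 2 deletes v;
   Ev5 v : path follows the step-5 call, deleting v;
   Ev6 v : path follows the step-6 call, adding v to F;
   EvL v : v is deleted in the loop of step 4 of the last call c_t. *)
Inductive event (T : Type) := Ev1 of T | Ev2 of T | Ev5 of T | Ev6 of T | EvL of T.

(* Termination of the last call c_t: in step 0, or in step 4 with the
   sequence of vertices deleted by the loop. *)
Inductive terminal (T : Type) := Term0 | Term4 of seq T.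

(* Current arguments (G, k, F) of a call; G is given by its vertex set. *)
Record state (T : finType) := State { sV : {set T}; sk : int; sF : {set T} }.

Section FVS.
Variables (T : finType) (e : rel T).

(* degree in the current graph G[V]; 0 if v is not a vertex *)
Definition deg (V : {set T}) (v : T) : nat :=
  if v \in V then #|[set u in V | e v u]| else 0.

Definition is_graph_cycle (V : {set T}) (c : seq T) : bool :=
  [&& 3 <= size c, uniq c, all (fun y => y \in V) c & cycle e c].

Definition has_cycle (V : {set T}) : Prop := exists c, is_graph_cycle V c.

Definition Frel (V F : {set T}) : rel T :=
  fun a b => [&& a \in F :&: V, b \in F :&: V & e a b].

Definition two_nbrs_same_comp (V F : {set T}) (v : T) : Prop :=
  exists u1 u2, [/\ u1 != u2, u1 \in F :&: V, u2 \in F :&: V,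
                    e v u1 && e v u2 & connect (Frel V F) u1 u2].

Definition stop0 (s : state T) : bool := (sk s < 0)%R || (sV s == set0).

Definition step1_applies (s : state T) : Prop :=
  exists v, v \in sV s /\ deg (sV s) v < 2.

Definition step2_applies (s : state T) : Prop :=
  exists v, v \in sV s :\: sF s /\ two_nbrs_same_comp (sV s) (sF s) v.

Definition is_maxdeg (s : state T) (v : T) : Prop :=
  v \in sV s :\: sF s /\
  forall w, w \in sV s :\: sF s -> deg (sV s) w <= deg (sV s) v.

Definition reaches_step3 (s : state T) : Prop :=
  ~~ stop0 s /\ ~ step1_applies s /\ ~ step2_applies s.

Definition apply_event (s : state T) (ev : event T) : state T :=
  match ev with
  | Ev1 v => State (sV s :\ v) (sk s) (sF s :\ v)
  | Ev2 v => State (sV s :\ v) (sk s - 1)%R (sF s)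
  | Ev5 v => State (sV s :\ v) (sk s - 1)%R (sF s)
  | Ev6 v => State (sV s) (sk s) (v |: sF s)
  | EvL v => State (sV s :\ v) (sk s) (sF s)
  end.

(* the recursive call represented by ev is made by the call with arguments s *)
Definition valid_rec_event (s : state T) (ev : event T) : Prop :=
  match ev with
  | Ev1 v => ~~ stop0 s /\ v \in sV s /\ deg (sV s) v < 2
  | Ev2 v => [/\ ~~ stop0 s, ~ step1_applies s, v \in sV s :\: sF s
              & two_nbrs_same_comp (sV s) (sF s) v]
  | Ev5 v => [/\ reaches_step3 s, is_maxdeg s v & deg (sV s) v <> 2]
  | Ev6 v => [/\ reaches_step3 s, is_maxdeg s v & deg (sV s) v <> 2]
  | EvL _ => False
  end.

Fixpoint valid_rec (s : state T) (ls : seq (event T)) : Prop :=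
  match ls with
  | [::] => True
  | ev :: ls' => valid_rec_event s ev /\ valid_rec (apply_event s ev) ls'
  end.

(* the loop of step 4: while G contains a cycle C, delete a vertex of C \ F *)
Fixpoint valid_loop (V F : {set T}) (xs : seq T) : Prop :=
  match xs with
  | [::] => ~ has_cycle V
  | x :: xs' => [/\ x \notin F,
                   (exists c, is_graph_cycle V c /\ x \in c)
                 & valid_loop (V :\ x) F xs']
  end.

Definition step4_applies (s : state T) : Prop :=
  reaches_step3 s /\ exists v, is_maxdeg s v /\ deg (sV s) v = 2.

Definition init_state (V0 : {set T}) (k0 : int) : state T := State V0 k0 set0.

(* An execution path of naive-fvs(G,k0,emptyset), G = (V0,e), given by its
   recursive-call events ls and its terminal call t, leading to a solution. *)
Definition leads_to_solution (V0 : {set T}) (k0 : int)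
    (ls : seq (event T)) (t : terminal T) : Prop :=
  valid_rec (init_state V0 k0) ls /\
  let sf := foldl apply_event (init_state V0 k0) ls in
  match t with
  | Term0 => stop0 sf /\ (0 <= sk sf)%R
  | Term4 xs => [/\ step4_applies sf, valid_loop (sV sf) (sF sf) xs
                  & ((size xs)%:Z <= sk sf)%R]
  end.

Definition all_events (ls : seq (event T)) (t : terminal T) : seq (event T) :=
  ls ++ (if t is Term4 xs then map (@EvL T) xs else [::]).

(* states: the j-th entry is the current (G,k,F) just before event j;
   the last entry (index size evs) is the state at the end of the path *)
Definition path_states (s0 : state T) (evs : seq (event T)) : seq (state T) :=
  s0 :: scanl apply_event s0 evs.

(* V_- in deletion order: pairs (event index, deleted vertex) *)
Definition minus_list (evs : seq (event T)) : seq (nat * T) :=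
  pmap (fun p : nat * event T =>
          match p.2 with
          | Ev2 v | Ev5 v | EvL v => Some (p.1, v)
          | _ => None
          end) (zip (iota 0 (size evs)) evs).

Definition Fprime (evs : seq (event T)) : {set T} :=
  [set v | has (fun ev => if ev is Ev6 w then w == v else false) evs].

(* effective decrements of u between states Gi (before x_i deleted) and
   Gnext (before x_{i+1} deleted, or end of path) *)
Definition delta (Gi Gnext : state T) (u : T) : int :=
  if u \in sF Gi then
    ((maxn (deg (sV Gi) u) 2)%:Z - (maxn (deg (sV Gnext) u) 2)%:Z)%R
  else 0%R.

End FVS.

(* Main.v *)
Require Import Defs.
From HB Require Import structures.
From mathcomp Require Import all_boot all_order all_algebra.
From mathcomp Require Import zify.
Import Order.TTheory GRing.Theory Num.Theory.
Set Implicit Arguments. Unset Strict Implicit. Unset Printing Implicit Defensive.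

Section Aux.
Variables (T : finType) (e : rel T).
Hypothesis e_sym : symmetric e.
Hypothesis e_irr : irreflexive e.

Lemma deg_notin (V : {set T}) u : u \notin V -> deg e V u = 0.
Proof. by rewrite /deg => /negbTE ->. Qed.

Lemma deg_del (V : {set T}) v u : u != v ->
  deg e (V :\ v) u = deg e V u - ((u \in V) && (v \in V) && e u v).
Proof.
move=> nuv; rewrite /deg !inE nuv /=.
case uV: (u \in V) => //=.
have -> : [set w in V :\ v | e u w] = [set w in V | e u w] :\ v.
  by apply/setP => w; rewrite !inE; case: (w == v); case: (w \in V).
rewrite [in RHS](cardsD1 v [set w in V | e u w]) !inE.
by case: (v \in V) (e u v) => [] [] /=; lia.
Qed.

Lemma deg_sub (V W : {set T}) u : W \subset V -> deg e W u <= deg e V u.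
Proof.
move=> sWV; rewrite /deg; case uW: (u \in W); last by [].
rewrite (subsetP sWV _ uW); apply: subset_leq_card; apply/subsetP => w.
by rewrite !inE => /andP[/(subsetP sWV) -> ->].
Qed.

Definition Ssum x (V : {set T}) := \sum_(u | u != x) maxn (deg e V u) 2.
Definition Csum x (V : {set T}) := \sum_(u | u != x) ((u \in V) && (deg e V u < 2) : nat).

Lemma adj_le x (V : {set T}) v : v \in V ->
  \sum_(u | u != x) ((u \in V) && e v u : nat) <= deg e V v.
Proof.
move=> vV.
have E : \sum_u ((u \in V) && e v u : nat) = deg e V v.
  rewrite /deg vV -sum1_card [RHS]big_mkcond /=.
  by apply: eq_bigr => u _; rewrite inE; case: (_ && _).
rewrite -E [X in _ <= X](bigID (fun u => u != x)) /=; apply: leq_addr.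
Qed.

Lemma per_u x (V : {set T}) v u : u != x -> v \in V -> (v == x) || (deg e V v < 2) ->
  maxn (deg e V u) 2 + ((u \in V :\ v) && (deg e (V :\ v) u < 2)) + (u == v)
  <= maxn (deg e (V :\ v) u) 2 + ((u \in V) && (deg e V u < 2)) + ((u \in V) && e v u).
Proof.
move=> ux vV hv.
case: (eqVneq u v) => [Euv | nuv].
  subst u.
  have hd : deg e V v < 2 by move: hv; rewrite (negbTE ux).
  rewrite !inE eqxx /= vV e_irr (@deg_notin (V :\ v)) ?inE ?eqxx /= ?hd /=; last by [].
  lia.
rewrite deg_del // !inE nuv /= vV [e v u]e_sym.
case uV: (u \in V) => /=.
  by case: (e u v) => /=; lia.
rewrite deg_notin ?uV //=.
Qed.

Lemma step_sum x (V : {set T}) v : v \in V -> (v == x) || (deg e V v < 2) ->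
  Ssum x V + Csum x (V :\ v) + (v != x) <= Ssum x (V :\ v) + Csum x V + deg e V v.
Proof.
move=> vV hv.
have E : \sum_(u | u != x) (u == v : nat) = (v != x).
  case: (eqVneq v x) => [-> | vx].
    by rewrite big1 // => u /negbTE ->.
  by rewrite (bigD1 v) //= eqxx big1 ?addn0 // => u /andP[_ /negbTE ->].
rewrite -E /Ssum /Csum -!big_split /=.
apply: (leq_trans (leq_sum _ (fun u (ux : u != x) => per_u ux vV hv))).
rewrite big_split /= leq_add2l; exact: adj_le.
Qed.

Lemma C_mono x (V : {set T}) : Csum x V <= Csum x (V :\ x).
Proof.
apply: leq_sum => u ux; rewrite !inE ux /=.
case uV: (u \in V) => //=.
have H := deg_sub u (subD1set V x).
case: (ltnP (deg e V u) 2) => h //=.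
by rewrite (leq_ltn_trans H h).
Qed.


Definition minus_of (ev : event T) : option T :=
  match ev with Ev2 v | Ev5 v | EvL v => Some v | _ => None end.
Definition isminus (ev : event T) : bool := if minus_of ev is Some _ then true else false.
Definition isEvL (ev : event T) : bool := if ev is EvL _ then true else false.

Definition gev (s : state T) (ev : event T) (rest : seq (event T)) : Prop :=
  match ev with
  | Ev1 v => v \in sV s /\ deg e (sV s) v < 2
  | Ev2 v | Ev5 v => v \in sV s :\: sF s /\ (forall w, w \in sV s -> 1 < deg e (sV s) w)
  | Ev6 _ => True
  | EvL v => v \in sV s :\: sF s /\ all isEvL rest
  end.

Fixpoint good (s : state T) (evs : seq (event T)) : Prop :=
  match evs with
  | [::] => True
  | ev :: r => gev s ev r /\ good (apply_event s ev) r
  end.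

Lemma good_cat p q s : good s (p ++ q) -> good (foldl (@apply_event T) s p) q.
Proof. by elim: p s => [|a p IH] s //= [_ /IH]. Qed.

Lemma good_app ls s L : valid_rec e s ls -> good (foldl (@apply_event T) s ls) L -> good s (ls ++ L).
Proof.
elim: ls s => [|ev ls IH] s //= [hv hr] hg; split; last exact: IH.
case: ev hv {hr hg} => v /=.
- by case=> _ [].
- case=> _ n1 vVF _; split => // w wV; rewrite ltnNge; apply/negP => h; apply: n1.
  by exists w.
- case=> [[_ [n1 _]] [vVF _] _]; split => // w wV; rewrite ltnNge; apply/negP => h; apply: n1.
  by exists w.
- by [].
- by [].
Qed.

Lemma good_loop xs (V : {set T}) k (F : {set T}) :
  valid_loop e V F xs -> good (State V k F) (map (@EvL T) xs).
Proof.
elim: xs V => [|y xs IH] V //= [yF [c [hc yc]] hl]; split; last exact: IH.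
split; last by rewrite all_map; apply/allP.
case/and4P: hc => _ _ /allP hall _.
by rewrite inE yF hall.
Qed.

Lemma mid_inv x (V0 : {set T}) mid post : forall s,
  good s (mid ++ post) -> all (predC isminus) mid -> x \notin sV s -> sV s \subset V0 ->
  Ssum x V0 + Csum x (sV s) <= Ssum x (sV s) + deg e V0 x ->
  sV (foldl (@apply_event T) s mid) \subset V0 /\
  Ssum x V0 <= Ssum x (sV (foldl (@apply_event T) s mid)) + deg e V0 x.
Proof.
elim: mid => [|a mid IH] s /=.
  by move=> _ _ _ sub h; split => //; lia.
case=> hg hr /andP[na hm] xs sub inv.
case: a hg hr na => v //= hg hr _; last exact: IH.
case: hg => vV hd.
have vx : v != x by apply: contraNneq xs => <-.
apply: IH => //=.
- by rewrite inE negb_and xs orbT.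
- exact: subset_trans (subD1set _ _) sub.
- have := @step_sum x _ _ vV (introT orP (or_intror hd)); rewrite vx /=; lia.
Qed.


Lemma Csum0 x (V : {set T}) : (forall w, w \in V -> 1 < deg e V w) -> Csum x V = 0.
Proof.
move=> h; apply: big1 => u _; case uV: (u \in V) => //=.
by rewrite ltnNge (h u uV).
Qed.

Lemma core (A : {set T}) s ev mid post x :
  good s (ev :: mid ++ post) -> minus_of ev = Some x -> all (predC isminus) mid ->
  (\sum_(u in A) delta e s (foldl (@apply_event T) s (ev :: mid)) u
     <= (deg e (sV s) x)%:Z)%R.
Proof.
move=> [hg hgr] hm hmid.
set s' := foldl _ _ _.
have [xF sub key] : [/\ x \notin sF s, sV s' \subset sV s &
     Ssum x (sV s) <= Ssum x (sV s') + deg e (sV s) x].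
  case: ev hg hgr hm @s' => v //= hg hgr [<-] {x}.
  - case: hg; rewrite inE => /andP[vF vV] hall.
    have [] := @mid_inv v (sV s) mid post _ hgr hmid.
    + by rewrite /= !inE eqxx.
    + exact: subD1set.
    + have := @step_sum v _ _ vV (introT orP (or_introl (eqxx v))).
      rewrite (@Csum0 v (sV s)) // eqxx /=; lia.
    by move=> h1 h2; split.
  - case: hg; rewrite inE => /andP[vF vV] hall.
    have [] := @mid_inv v (sV s) mid post _ hgr hmid.
    + by rewrite /= !inE eqxx.
    + exact: subD1set.
    + have := @step_sum v _ _ vV (introT orP (or_introl (eqxx v))).
      rewrite (@Csum0 v (sV s)) // eqxx /=; lia.
    by move=> h1 h2; split.
  - case: hg; rewrite inE => /andP[vF vV] hall.
    case: mid hmid hall {hgr} => [|a mid] /=; last first.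
      by case: a.
    move=> _ _; split => //=; first exact: subD1set.
    have := @step_sum v _ _ vV (introT orP (or_introl (eqxx v))).
    have := C_mono v (sV s); rewrite eqxx /=; lia.
have E : forall (P : pred T) (F : T -> nat),
    (\sum_(u | P u) Posz (F u))%R = Posz (\sum_(u | P u) F u).
  move=> P F; by rewrite (big_morph Posz PoszD (erefl (Posz 0))).
apply: (@le_trans _ _ (\sum_(u | u != x) (Posz (maxn (deg e (sV s) u) 2)
                         - Posz (maxn (deg e (sV s') u) 2)))%R).
  rewrite [X in (_ <= X)%R]big_mkcond [X in (X <= _)%R]big_mkcond /=.
  apply: ler_sum => u _.
  have hmx : (maxn (deg e (sV s') u) 2 <= maxn (deg e (sV s) u) 2)%N.
    have := deg_sub u sub; lia.
  rewrite /delta.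
  case: (eqVneq u x) => [-> | ux]; first by rewrite (negbTE xF); case: (x \in A).
  case: (u \in A); case: (u \in sF s) => /=; lia.
rewrite sumrB !E; move: key; rewrite /Ssum; lia.
Qed.


Definition gm (p : nat * event T) : option (nat * T) :=
  match p.2 with
  | Ev2 v | Ev5 v | EvL v => Some (p.1, v)
  | _ => None
  end.

Definition mlist n (evs : seq (event T)) := pmap gm (zip (iota n (size evs)) evs).

Lemma mlist_cons n a s : mlist n (a :: s) =
  if minus_of a is Some v then (n, v) :: mlist n.+1 s else mlist n.+1 s.
Proof. by case: a. Qed.

Lemma mlist_first s m :
  (if onth (mlist m s) 0 is Some (j', _) then j' else m + size s) = m + find isminus s.
Proof.
elim: s m => [|a s IH] m /=; first by rewrite /mlist.
case: a => v; rewrite mlist_cons; have := IH m.+1; rewrite [minus_of _]/=; case: (mlist m.+1 s) => [|[j' y] r] /=; lia.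
Qed.

Lemma all_take_find s : all (predC isminus) (take (find isminus s) s).
Proof. by elim: s => [|a s IH] //=; case: a => v /=. Qed.

Lemma window evs : forall n i j x, onth (mlist n evs) i = Some (j, x) ->
  exists pre ev mid post, [/\ evs = pre ++ ev :: mid ++ post, j = n + size pre,
    minus_of ev = Some x, all (predC isminus) mid &
    (if onth (mlist n evs) i.+1 is Some (j', _) then j' else n + size evs)
       = n + size pre + 1 + size mid].
Proof.
elim: evs => [|a s IH] n i j x; first by rewrite /mlist; case: i.
rewrite mlist_cons.
have Hrec : forall i', onth (mlist n.+1 s) i' = Some (j, x) ->
  exists pre ev mid post, [/\ a :: s = pre ++ ev :: mid ++ post, j = n + size pre,
    minus_of ev = Some x, all (predC isminus) mid &
    (if onth (mlist n.+1 s) i'.+1 is Some (j', _) then j' else n + size (a :: s))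
       = n + size pre + 1 + size mid].
  move=> i' /IH [pre [ev [mid [post [E1 E2 E3 E4 E5]]]]].
  exists (a :: pre), ev, mid, post; split => //=.
  - by rewrite E1.
  - by rewrite E2; lia.
  - move: E5 => /=; case: (mlist n.+1 s) => [|? r] /=; [|case: (onth r i') => [[j' y]|] /=]; lia.
case Ha: (minus_of a) => [v|]; last exact: Hrec.
case: i => [|i] /=; last exact: Hrec.
case=> <- <-.
exists [::], a, (take (find isminus s) (s)), (drop (find isminus s) s); split => //=.
- by rewrite cat_take_drop.
- by rewrite addn0.
- exact: all_take_find.
- have := mlist_first s n.+1.
  rewrite size_takel ?find_size //.
  move=> /=; case: (mlist n.+1 s) => [|[j' y] r] /=; lia.
Qed.

Lemma nth_path_states s0 d evs k : k <= size evs ->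
  nth d (path_states s0 evs) k = foldl (@apply_event T) s0 (take k evs).
Proof.
rewrite /path_states.
elim: evs s0 k => [|a s IH] s0 [|k] //= hk.
exact: IH.
Qed.

End Aux.

Theorem mainTheorem5 (T : finType) (e : rel T)
  (e_sym : symmetric e) (e_irr : irreflexive e)
  (V0 : {set T}) (k0 : int) (ls : seq (event T)) (t : terminal T) :
  leads_to_solution e V0 k0 ls t ->
  let evs := all_events ls t in
  let sts := path_states (init_state V0 k0) evs in
  let mins := minus_list evs in
  forall (i j : nat) (x : T),
    onth mins i = Some (j, x) ->
    let Gi := nth (init_state V0 k0) sts j in
    let jnext := if onth mins i.+1 is Some (j', _) then j' else size evs in
    let Gnext := nth (init_state V0 k0) sts jnext in
    (\sum_(u in Fprime evs) delta e Gi Gnext u <= (deg e (sV Gi) x)%:Z)%R.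
Proof.
move=> Hsol.
have Hgood : good e (init_state V0 k0) (all_events ls t).
  case: Hsol => hv ht; rewrite /all_events.
  apply: good_app => //.
  case: t ht => [|xs] /=; first by [].
  case=> _ hl _; move: hl.
  case: (foldl _ _ ls) => V k F hl; exact: good_loop.
move=> evs sts mins i j x Hij; cbv zeta.
set Gi := nth _ sts j.
set jnext := match onth mins i.+1 with Some (j', _) => j' | None => size evs end.
set Gnext := nth _ sts jnext.
have [pre [ev [mid [post [E1 E2 E3 E4 E5]]]]] := @window _ evs 0 i j x Hij.
have hjn : jnext = size pre + 1 + size mid.
  move: E5; rewrite add0n /jnext /mins; exact.
have Hs : size evs = size pre + 1 + size mid + size post.
  by rewrite E1 size_cat /= size_cat; lia.
have E1' : evs = (pre ++ ev :: mid) ++ post by rewrite E1 -catA.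
have HGi : Gi = foldl (@apply_event T) (init_state V0 k0) pre.
  rewrite /Gi /sts nth_path_states; last by lia.
  by rewrite E2 add0n E1 take_size_cat.
have HGn : Gnext = foldl (@apply_event T) (foldl (@apply_event T) (init_state V0 k0) pre) (ev :: mid).
  rewrite /Gnext /sts nth_path_states; last by lia.
  rewrite hjn E1' take_size_cat ?foldl_cat // size_cat /=; lia.
rewrite HGn HGi.
apply: core => //.
have H2 : good e (init_state V0 k0) evs := Hgood.
rewrite E1 in H2; exact: good_cat H2.
Qed.
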